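(* For every integer $d\ge 1$ we have $\tau(d)<4(2d)^d$. In particular, $\tau(d)$ is finite for all $d$.
   Context: For an integer $d\ge1$, call $[-1,1]^d$ the box. A sequence $v_1,\dots,v_t$ ($t\ge 2$) of vectors in $[-1,1]^d$ is called minimal if (i) $v_1+\dots+v_t\in[-1,1]^d$, and (ii) for every index set $S\subset\{1,\dots,t\}$ with $2\le |S|<t$, the sum $\sum_{i\in S}v_i$ lies outside $[-1,1]^d$. Let $\tau(d)$ denote the largest $t$ for which a minimal sequence of length $t$ in $[-1,1]^d$ exists (note $\tau(d)\ge 2$, since condition (ii) is vacuous for $t=2$). Equivalently, $\tau(d)$ is the smallest integer such that whenever $v_1,\dots,v_t\in[-1,1]^d$, $t\ge2$, have sum in $[-1,1]^d$, there is $S\subseteq\{1,\dots,t\}$ with $2\le|S|\le\tau(d)$ and $\sum_{i\in S}v_i\in[-1,1]^d$. *)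

(* Defs.v *)
From HB Require Import structures.
From mathcomp Require Import all_boot all_order all_algebra.
From mathcomp Require Import reals.
Set Implicit Arguments. Unset Strict Implicit. Unset Printing Implicit Defensive.
Import Order.TTheory GRing.Theory Num.Theory.
Local Open Scope ring_scope.

Definition in_box (R : realType) (d : nat) (x : 'rV[R]_d) : Prop :=
  forall j : 'I_d, -1 <= x 0 j <= 1.

Definition minimal_seq (R : realType) (d t : nat) (v : 'I_t -> 'rV[R]_d) : Prop :=
  [/\ (2 <= t)%N,
      (forall i, in_box (v i)),
      in_box (\sum_(i < t) v i)
    & forall S : {set 'I_t}, (2 <= #|S|)%N -> (#|S| < t)%N ->
        ~ in_box (\sum_(i in S) v i)].

(* Main.v *)
Require Import Defs.
From HB Require Import structures.
From mathcomp Require Import all_boot all_order all_algebra.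
From mathcomp Require Import reals.
From mathcomp Require Import ring lra zify.
Set Implicit Arguments. Unset Strict Implicit. Unset Printing Implicit Defensive.
Import Order.TTheory GRing.Theory Num.Theory.
Local Open Scope ring_scope.

Lemma reindexF (V : zmodType) (I : finType) (F : {set I}) (H : I -> V) :
  \sum_i (if i \in F then H i else 0) = \sum_(a < #|F|) H (enum_val a).
Proof. by rewrite -big_mkcond /= (big_enum_val H). Qed.

Lemma kernel_ex (R : realType) (d : nat) (I : finType) (u : I -> 'rV[R]_d)
  (F : {set I}) : (d.+1 < #|F|)%N ->
  exists z : I -> R, [/\ exists i, z i != 0, forall i, i \notin F -> z i = 0,
    \sum_i z i = 0 & \sum_i z i *: u i = 0].
Proof.
move=> hF.
have [i0 Fi0] : exists i0, i0 \in F by apply/card_gt0P; lia.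
pose k := #|F|.
pose M : 'M[R]_(k, 1 + d) := row_mx (const_mx 1) (\matrix_(a < k) u (enum_val a)).
have rk : (0 < \rank (kermx M))%N by rewrite mxrank_ker; have := rank_leq_col M; lia.
have [[a b] /= hab | H] := pickP (fun ab : 'I_k * 'I_k => kermx M ab.1 ab.2 != 0); last first.
  have K0 : kermx M = 0.
    by apply/matrixP => a b; move/negbFE: (H (a, b)) => /= /eqP ->; rewrite mxE.
  by move: rk; rewrite K0 mxrank0.
pose zr := row a (kermx M).
have hz : zr *m M = 0 by rewrite -row_mul mulmx_ker row0.
move: hz; rewrite mul_mx_row => /eqP; rewrite row_mx_eq0 => /andP[/eqP h1 /eqP h2].
pose z i := if i \in F then zr 0 (enum_rank_in Fi0 i) else 0.
exists z; split.
- exists (enum_val b); rewrite /z enum_valP enum_valK_in /zr mxE; exact: hab.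
- by move=> i /negbTE; rewrite /z => ->.
- rewrite (eq_bigr (fun i => if i \in F then zr 0 (enum_rank_in Fi0 i) else 0)) //.
  rewrite reindexF.
  under eq_bigr do rewrite enum_valK_in.
  have e : \sum_(c < k) zr 0 c = (zr *m (const_mx 1 : 'M[R]_(k, 1))) 0 0.
    by rewrite mxE; apply: eq_bigr => c _; rewrite !mxE mulr1.
  by rewrite e h1 mxE.
- rewrite (eq_bigr (fun i => if i \in F then zr 0 (enum_rank_in Fi0 i) *: u i else 0)); last first.
    by move=> i _; rewrite /z; case: ifP => _ //; rewrite scale0r.
  rewrite reindexF.
  under eq_bigr do rewrite enum_valK_in.
  apply: (etrans _ h2); rewrite mulmx_sum_row; apply: eq_bigr => c _; by rewrite rowK.
Qed.

Lemma ex_min (R : realType) (I : finType) (P : {set I}) (f : I -> R) :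
  P != set0 -> exists2 i, i \in P & forall j, j \in P -> f i <= f j.
Proof.
move=> /set0Pn [x Px].
suff [i hi him] : exists2 i, i \in enum P & forall j, j \in enum P -> f i <= f j.
  by exists i; [rewrite -mem_enum | move=> j hj; apply: him; rewrite mem_enum].
have : enum P != [::] by apply/eqP => h; have := mem_enum P x; rewrite h Px.
elim: (enum P) => [|y s IH] // _.
case: s IH => [|z s] IH.
  by exists y; rewrite ?mem_seq1 // => j; rewrite mem_seq1 => /eqP ->.
have [m hm hmin] := IH isT.
have [le|lt] := leP (f y) (f m).
  exists y; first exact: mem_head.
  move=> j; rewrite in_cons => /orP[/eqP -> //|/hmin]; exact: le_trans.
exists m; first by rewrite in_cons hm orbT.
move=> j; rewrite in_cons => /orP[/eqP ->|/hmin //]; exact: ltW.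
Qed.

Definition valid (R : realType) (d : nat) (I : finType) (u : I -> 'rV[R]_d)
  (X : {set I}) (c : R) (l : I -> R) : Prop :=
  [/\ forall i, 0 <= l i <= 1, forall i, i \notin X -> l i = 0,
      \sum_i l i = c & \sum_i l i *: u i = 0].

Definition frac (R : realType) (I : finType) (l : I -> R) : {set I} :=
  [set i | 0 < l i < 1].

Lemma vertex (R : realType) (d : nat) (I : finType) (u : I -> 'rV[R]_d)
  (X : {set I}) (c : R) (l : I -> R) : valid u X c l ->
  exists l', valid u X c l' /\ (#|frac l'| <= d.+1)%N.
Proof.
move: {2}#|frac l| (leqnn #|frac l|) => n; elim: n l => [|n IH] l hn hv.
  by exists l; split => //; lia.
have [small|big] := leqP #|frac l| d.+1; first by exists l.
have [z [[i1 zi1] zF zs zu]] := kernel_ex u big.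
case: hv => hb hX hs hu.
have PF : forall i, z i != 0 -> i \in frac l.
  by move=> i; apply: contraR => /zF ->; rewrite eqxx.
pose P := [set i | z i != 0].
have P0 : P != set0 by apply/set0Pn; exists i1; rewrite inE.
pose b i := if 0 < z i then (1 - l i) / z i else l i / - z i.
have [i0 Pi0 hmin] := ex_min b P0.
have bpos : forall i, i \in P -> 0 < b i.
  move=> i; rewrite inE => zi; have := PF i zi; rewrite inE => /andP [l0 l1].
  rewrite /b; case: ifP => zp.
    by apply: divr_gt0; lra.
  have zn : z i < 0 by rewrite lt_neqAle zi /= leNgt zp.
  by apply: divr_gt0; lra.
pose th := b i0.
have thpos : 0 < th := bpos i0 Pi0.
pose l' i := l i + th * z i.
have key : forall i, i \in P -> (0 <= l' i <= 1) /\ (i = i0 -> (l' i = 0 \/ l' i = 1)).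
  move=> i Pi; have thle := hmin i Pi; move: (Pi); rewrite inE => zi.
  have := PF i zi; rewrite inE => /andP [l0 l1].
  rewrite /l' /th; move: thle; rewrite /th.
  rewrite {2}/b; case: ifP => zp.
    have e : (1 - l i) / z i * z i = 1 - l i by rewrite divfK // gt_eqF.
    move=> thle; have h1 : b i0 * z i <= (1 - l i) / z i * z i.
      by rewrite ler_wpM2r // ltW.
    have h2 : 0 <= b i0 * z i by rewrite mulr_ge0 // ltW.
    split; first by apply/andP; split; lra.
    move=> ei; right; rewrite -ei /b zp e; lra.
  have zn : z i < 0 by rewrite lt_neqAle zi /= leNgt zp.
  have e : l i / - z i * - z i = l i by rewrite divfK // oppr_eq0 lt_eqF.
  move=> thle; have h1 : b i0 * - z i <= l i / - z i * - z i.
    by rewrite ler_wpM2r // oppr_ge0 ltW.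
  have h2 : 0 <= b i0 * - z i by rewrite mulr_ge0 // ?oppr_ge0 ltW.
  rewrite e in h1; rewrite mulrN in h1 h2.
  split; first by apply/andP; split; lra.
  move=> ei; left; rewrite -ei /b zp -[_ * z i]opprK -mulrN e; lra.
have hv' : valid u X c l'.
  split.
  - move=> i; case: (boolP (z i != 0)) => zi.
      by case: (key i); rewrite ?inE.
    by move/negbNE/eqP: zi; rewrite /l' => ->; rewrite mulr0 addr0.
  - move=> i iX; rewrite /l' hX // zF ?mulr0 ?addr0 //.
    by rewrite inE hX // ltxx.
  - by rewrite /l' big_split /= -mulr_sumr zs mulr0 addr0.
  - under eq_bigr do rewrite scalerDl -scalerA.
    by rewrite big_split /= -scaler_sumr zu scaler0 hu addr0.
have sub : frac l' \subset frac l :\ i0.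
  apply/subsetP => i; rewrite !inE => /andP [h0 h1].
  case: (boolP (z i != 0)) => zi.
    apply/andP; split.
      apply/eqP => ei; subst i.
      have [_ /(_ erefl) [] e] := key i0 Pi0; by move: h0 h1; rewrite e; lra.
    by have := PF i zi; rewrite inE.
  move/negbNE/eqP: zi => zi.
  have : l' i = l i by rewrite /l' zi mulr0 addr0.
  move=> e; rewrite -e h0 h1 andbT.
  rewrite andbT; apply/eqP => ei; subst i; by move: Pi0; rewrite inE zi eqxx.
apply: (IH l') => //.
have := subset_leq_card sub; have := cardsD1 i0 (frac l).
have -> : i0 \in frac l by apply: PF; move: Pi0; rewrite inE.
move: hn; lia.
Qed.

Lemma sum_in (R : realType) (I : finType) (X : {set I}) (f : I -> R) :
  (forall i, i \notin X -> f i = 0) -> \sum_i f i = \sum_(i in X) f i.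
Proof.
move=> h; rewrite (bigID (mem X)) /= [X in _ + X]big1 ?addr0 // => i; exact: h.
Qed.

Lemma remove (R : realType) (d : nat) (I : finType) (u : I -> 'rV[R]_d)
  (X : {set I}) (m : nat) (l : I -> R) :
  (d < m)%N -> #|X| = m -> valid u X (m - d)%:R l ->
  exists2 i, i \in X & exists l', valid u (X :\ i) (m.-1 - d)%:R l'.
Proof.
move=> hdm hX [hb hsX hs hu].
pose q : R := (m.-1 - d)%:R / (m - d)%:R.
have mdpos : 0 < (m - d)%:R :> R by rewrite ltr0n subn_gt0.
have q0 : 0 <= q by rewrite divr_ge0 ?ler0n // ltW.
have q1 : q <= 1 by rewrite ler_pdivrMr // mul1r ler_nat; lia.
pose mu i := l i * q.
have hmu : valid u X (m.-1 - d)%:R mu.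
  split.
  - move=> i; have /andP[a b] := hb i; apply/andP; split; first exact: mulr_ge0.
    by rewrite /mu; nra.
  - by move=> i iX; rewrite /mu hsX // mul0r.
  - by rewrite /mu -mulr_suml hs /q mulrC divfK // gt_eqF.
  - under eq_bigr do rewrite /mu mulrC -scalerA.
    by rewrite -scaler_sumr hu scaler0.
have [mu' [[hb' hX' hs' hu'] hfr]] := vertex hmu.
have [i /andP[iX /eqP z0] | H] := pickP (fun i => (i \in X) && (mu' i == 0)).
  exists i => //; exists mu'; split => //.
  move=> j; rewrite in_setD1 negb_and negbK => /orP[/eqP -> //|]; exact: hX'.
exfalso.
have pos : forall i, i \in X -> 0 < mu' i.
  move=> i iX; have /andP[a _] := hb' i; rewrite lt_neqAle a andbT eq_sym.
  by have := H i; rewrite /= iX /= => ->.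
pose F := frac mu'.
have FX : F \subset X.
  apply/subsetP => i; rewrite inE => /andP[a _]; apply: contraLR a => /hX' ->.
  by rewrite ltxx.
have e1 : \sum_i mu' i = \sum_(i in F) mu' i + #|X :\: F|%:R.
  rewrite (sum_in hX') (big_setID F) /= (setIidPr FX); congr (_ + _).
  rewrite -sumr_const; apply: eq_bigr => i; rewrite !inE => /andP[nF iX].
  have /andP[_ b] := hb' i; move: nF; rewrite pos //= => nF.
  by apply/eqP; rewrite eq_le b /= leNgt.
have e2 : (#|X :\: F| + #|F| = m)%N by rewrite -hX -(cardsID F X) (setIidPr FX) addnC.
have e3 : ((m.-1 - d) + d + 1 = m)%N by lia.
have r2 := congr1 (fun x => x%:R : R) e2; have r3 := congr1 (fun x => x%:R : R) e3.
rewrite /= !natrD in r2 r3.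
have fd : #|F|%:R <= d%:R + 1 :> R by rewrite natr1 ler_nat.
have d0 : 0 <= d%:R :> R by rewrite ler0n.
rewrite hs' in e1; clear e2 e3 H hfr.
have [F0|/set0Pn [i1 Fi1]] := eqVneq F set0.
  rewrite F0 big_set0 in e1; rewrite F0 cards0 in r2; clear -e1 r2 r3 d0; lra.
have sF : 0 < \sum_(i in F) mu' i.
  rewrite (big_setD1 i1) //=.
  have p1 : 0 < mu' i1 by apply: pos; apply: (subsetP FX).
  have p2 : 0 <= \sum_(i in F :\ i1) mu' i.
    by apply: sumr_ge0 => i _; case/andP: (hb' i).
  clear -p1 p2; lra.
clear -e1 r2 r3 d0 fd sF; lra.
Qed.

Lemma box_bound (R : realType) (d : nat) (I : finType) (u : I -> 'rV[R]_d)
  (X : {set I}) : (forall i j, `|u i 0 j| <= 1) ->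
  ((d <= #|X|)%N -> exists l, valid u X (#|X| - d)%:R l) ->
  forall j, `|(\sum_(i in X) u i) 0 j| <= d%:R.
Proof.
move=> hu hinv j; rewrite summxE.
have [hd|hd] := leqP d #|X|; last first.
  apply: le_trans (ler_norm_sum _ _ _) _.
  apply: le_trans (_ : \sum_(i in X) (1 : R) <= _).
    by apply: ler_sum => i _; apply: hu.
  by rewrite sumr_const ler_nat; lia.
have [l [hb hX hs hl]] := hinv hd.
have hl0 : \sum_(i in X) l i * u i 0 j = 0.
  rewrite -(sum_in (f := fun i => l i * u i 0 j)); last by move=> i /hX ->; rewrite mul0r.
  have h := congr1 (fun M : 'rV[R]_d => M 0 j) hl; rewrite /= summxE mxE in h.
  by apply: (etrans _ h); apply: eq_bigr => i _; rewrite mxE.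
have hsX : \sum_(i in X) l i = (#|X| - d)%:R by rewrite -(sum_in hX).
have e : \sum_(i in X) u i 0 j = \sum_(i in X) (1 - l i) * u i 0 j.
  under [RHS]eq_bigr do rewrite mulrBl mul1r.
  by rewrite sumrB hl0 subr0.
rewrite e; apply: le_trans (ler_norm_sum _ _ _) _.
apply: le_trans (_ : \sum_(i in X) (1 - l i) <= _).
  apply: ler_sum => i _; have /andP[a b] := hb i.
  rewrite normrM ger0_norm ?subr_ge0 //.
  by rewrite -[X in _ <= X]mulr1 ler_wpM2l ?subr_ge0.
rewrite sumrB hsX sumr_const natrB //; lra.
Qed.

Lemma base_inv (R : realType) (d : nat) (I : finType) (u : I -> 'rV[R]_d) :
  \sum_i u i = 0 -> (d <= #|I|)%N ->
  exists l, valid u [set: I] (#|[set: I]| - d)%:R l.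
Proof.
move=> hs hd; rewrite cardsT.
pose c : R := (#|I| - d)%:R / #|I|%:R.
exists (fun _ => c); split.
- move=> _; have [N0|Npos] := posnP #|I|.
    by rewrite /c N0 invr0 mulr0 lexx ler01.
  apply/andP; split; first by rewrite divr_ge0 ?ler0n.
  by rewrite ler_pdivrMr ?ltr0n // mul1r ler_nat leq_subr.
- by move=> i; rewrite in_setT.
- rewrite sumr_const; change (c *+ #|I| = (#|I| - d)%:R).
  have [N0|Npos] := posnP #|I|.
    by rewrite /c N0 /= mulr0n; have -> : d = 0%N by lia.
  by rewrite -[_ *+ #|I|]mulr_natr /c divfK // pnatr_eq0 -lt0n Npos.
- by rewrite -(scaler_sumr c) hs scaler0.
Qed.

Lemma chain (R : realType) (d : nat) (I : finType) (u : I -> 'rV[R]_d) :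
  (forall i j, `|u i 0 j| <= 1) -> \sum_i u i = 0 ->
  exists B : nat -> {set I}, forall m, (m <= #|I|)%N ->
  [/\ #|B m| = m, (forall m', (m <= m' <= #|I|)%N -> B m \subset B m') &
      forall j, `|(\sum_(i in B m) u i) 0 j| <= d%:R].
Proof.
move=> hu hs.
set N := #|I|.
pose inv (m : nat) (X : {set I}) := (d <= m)%N -> exists l, valid u X (m - d)%:R l.
suff: forall r, (r <= N)%N -> exists B : nat -> {set I},
  (forall m, (N - r <= m <= N)%N -> [/\ #|B m| = m,
     (forall m', (m <= m' <= N)%N -> B m \subset B m') &
     forall j, `|(\sum_(i in B m) u i) 0 j| <= d%:R]) /\ inv (N - r)%N (B (N - r)%N).
  move=> /(_ N (leqnn N)) [B [HB _]]; exists B => m hm; apply: HB.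
  by rewrite subnn hm.
elim => [_|r IH hr].
  exists (fun _ => setT); split; last first.
    by rewrite subn0 /inv => hd; have := base_inv hs hd; rewrite cardsT.
  move=> m; rewrite subn0 => hm; have -> : m = N by lia.
  split; first by rewrite cardsT.
    by move=> m' _; exact: subxx.
  apply: box_bound => // hd; apply: (base_inv hs); move: hd; by rewrite cardsT.
have [B [HB Hinv]] := IH (ltnW hr).
set m0 := (N - r)%N in HB Hinv.
have m0pos : (0 < m0)%N by rewrite /m0; lia.
have [cX sX bX] : [/\ #|B m0| = m0,
     (forall m', (m0 <= m' <= N)%N -> B m0 \subset B m') &
     forall j, `|(\sum_(i in B m0) u i) 0 j| <= d%:R].
  by apply: HB; rewrite leqnn /m0 leq_subr.
set X := B m0 in cX sX bX Hinv.
have [i iX hi] : exists2 i, i \in X & inv m0.-1 (X :\ i).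
  have [h|h] := leqP d m0.-1.
    have [l hl] := Hinv (leq_trans h (leq_pred _)).
    have hdm : (d < m0)%N by lia.
    have [i iX [l' hl']] := remove hdm cX hl.
    by exists i => // _; exists l'.
  have [i iX] : exists i, i \in X by apply/card_gt0P; rewrite cX.
  by exists i => // h'; lia.
have eN : (N - r.+1 = m0.-1)%N by rewrite /m0; lia.
exists (fun k => if k == m0.-1 then X :\ i else B k); split; last by rewrite eN eqxx.
move=> m; rewrite eN => hm.
have cXi : #|X :\ i| = m0.-1 by move: (cardsD1 i X); rewrite iX cX; lia.
case: (eqVneq m m0.-1) => [->|ne].
  split => //.
  - move=> m' hm'; case: (eqVneq m' m0.-1) => [_|ne']; first exact: subxx.
    apply: subset_trans (subD1set X i) _; apply: sX; lia.
  - by apply: box_bound => //; rewrite cXi.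
have hm0 : (m0 <= m <= N)%N by lia.
have [c1 s1 b1] : [/\ #|B m| = m,
     (forall m', (m <= m' <= N)%N -> B m \subset B m') &
     forall j, `|(\sum_(i in B m) u i) 0 j| <= d%:R] by apply: HB.
split => //.
move=> m' hm'; have -> : (m' == m0.-1) = false by apply/eqP; lia.
exact: s1.
Qed.

Lemma big_opt (V : zmodType) (T : finType) (F : option T -> V) :
  \sum_o F o = F None + \sum_i F (Some i).
Proof.
have e : [set: option T] :\ None = Some @: [set: T].
  apply/setP => -[i|]; rewrite !inE /=.
    by rewrite imset_f.
  by apply/esym/imsetP => -[x].
have -> : \sum_o F o = \sum_(o in [set: option T]) F o.
  by apply: eq_bigl => o; rewrite in_setT.
rewrite (big_setD1 None) ?in_setT //= e big_imset /=.
  by congr (_ + _); apply: eq_bigl => o; rewrite in_setT.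
by move=> x y _ _ [].
Qed.

Lemma pigeon (t : nat) (C : finType) (f : 'I_t -> C) :
  (2 * #|C| < t)%N -> exists y, (2 < #|[set i | f i == y]|)%N.
Proof.
move=> h; apply/existsP; apply: contraLR h; rewrite negb_exists => /forallP H.
rewrite -leqNgt.
have e : t = (\sum_(y : C) #|[set i | f i == y]|)%N.
  rewrite -{1}(card_ord t) -sum1_card (partition_big f xpredT) //=.
  by apply: eq_bigr => y _; rewrite -sum1_card; apply: eq_bigl => i; rewrite inE.
rewrite e mulnC -sum_nat_const; apply: leq_sum => y _.
by have := H y; rewrite -leqNgt.
Qed.

Definition cellc (R : realType) (d : nat) (r : R) : nat :=
  minn `|Num.floor (r + d%:R)|%N (2 * d).-1.

Lemma cellc_le (R : realType) (d : nat) (r : R) : (cellc d r <= (2 * d).-1)%N.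
Proof. exact: geq_minr. Qed.

Lemma floor_nat (R : realType) (d : nat) (x : R) : 0 <= x + d%:R ->
  exists p : nat, [/\ `|Num.floor (x + d%:R)|%N = p, p%:R <= x + d%:R & x + d%:R < p%:R + 1].
Proof.
move=> hx; set a := Num.floor (x + d%:R).
have a0 : (0 <= a)%R by rewrite /a floor_ge0.
have pa : a = (`|a|%N)%:Z by rewrite gez0_abs.
exists `|a|%N; split => //.
  by have := floor_le (x + d%:R); rewrite -/a {1}pa.
have := floorD1_gt (x + d%:R); rewrite -/a {1}pa intrD.
by [].
Qed.

Lemma cell_prop (R : realType) (d : nat) (x y : R) : (1 <= d)%N ->
  `|x| <= d%:R -> `|y| <= d%:R -> cellc d x = cellc d y -> `|x - y| <= 1.
Proof.
move=> d1; rewrite !ler_norml => /andP[x1' x2] /andP[y1' y2].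
have x1 : - (d%:R) <= x := x1'. have y1 : - (d%:R) <= y := y1'. clear x1' y1'.
have [p [hp p1 p2]] := @floor_nat R d x ltac:(lra).
have [q [hq q1 q2]] := @floor_nat R d y ltac:(lra).
rewrite /cellc hp hq => e.
have [pq|pq] := eqVneq p q.
  rewrite -pq in q1 q2; apply/andP; split; lra.
have [Kp Kq] : ((2 * d).-1 <= p)%N /\ ((2 * d).-1 <= q)%N by lia.
have eK : ((2 * d).-1 + 1 = d + d)%N by lia.
have rK := congr1 (fun n => n%:R : R) eK; rewrite /= !natrD in rK.
move: Kp Kq; rewrite -!(ler_nat R) => Kp Kq.
apply/andP; split; lra.
Qed.

Theorem theorem1 (R : realType) (d t : nat) (v : 'I_t -> 'rV[R]_d) :
  (1 <= d)%N -> minimal_seq v -> (t < 4 * (2 * d) ^ d)%N.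
Proof.
move=> d1 [t2 hv hs hmin].
rewrite ltnNge; apply/negP => ht.
set s := \sum_(i < t) v i in hs hmin.
pose u (o : option 'I_t) : 'rV[R]_d := if o is Some i then v i else - s.
have hu : forall o j, `|u o 0 j| <= 1.
  move=> [i|] j /=; rewrite ?mxE ?normrN ler_norml; [exact: hv | exact: hs].
have hsu : \sum_o u o = 0 by rewrite big_opt /= addrC subrr.
have [B HB] := chain hu hsu.
have cardI : #|{: option 'I_t}| = t.+1 by rewrite card_option card_ord.
rewrite cardI in HB.
pose K := (2 * d).-1.
pose sig (m : nat) := \sum_(o in B m) u o.
pose f (m : 'I_t) : {ffun 'I_d -> 'I_K.+1} := [ffun j => inord (cellc d (sig m 0 j))].
have cardC : #|{ffun 'I_d -> 'I_K.+1}| = ((2 * d) ^ d)%N.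
  by rewrite card_ffun !card_ord; congr (_ ^ _)%N; rewrite /K; lia.
have hp : (2 * #|{ffun 'I_d -> 'I_K.+1}| < t)%N.
  rewrite cardC; have : (0 < (2 * d) ^ d)%N by rewrite expn_gt0; lia.
  move: ht; set X := ((2 * d) ^ d)%N; lia.
have [y hy] := pigeon f hp.
set S := [set m | f m == y] in hy.
have [i0 Si0] : exists i0, i0 \in S by apply/card_gt0P; lia.
case: (@arg_minnP _ i0 (mem S) (fun m : 'I_t => val m) Si0) => i Si0' imin.
have Si : i \in S by [].
have [j [k [jS kS jk]]] : exists j k, [/\ j \in S :\ i, k \in S :\ i & j != k].
  apply/card_gt1P; move: (cardsD1 i S); rewrite Si; lia.
have [a [b [aS bS ab]]] : exists a b : 'I_t, [/\ a \in S, b \in S & (a + 2 <= b)%N].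
  move: jS kS; rewrite !in_setD1 => /andP[ji jS] /andP[ki kS].
  have := imin j jS; have := imin k kS.
  move: ji ki jk; rewrite -!(inj_eq val_inj) /= => ji ki jk ik ij.
  have [h|h] := leqP (i + 2) j.
    by exists i, j.
  by exists i, k; split => //; lia.
have hat : (a <= t.+1)%N by have := ltn_ord a; lia.
have hbt : (b <= t.+1)%N by have := ltn_ord b; lia.
have close : forall c, `|sig b 0 c - sig a 0 c| <= 1.
  move=> c; apply: (cell_prop d1).
  - by case: (HB b hbt).
  - by case: (HB a hat).
  have : f b = f a by move: aS bS; rewrite !inE => /eqP -> /eqP ->.
  move/ffunP => /(_ c); rewrite !ffunE => /(congr1 (@nat_of_ord _)).
  by rewrite !inordK // ltnS cellc_le.
have [ca sa _] := HB a hat.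
have [cb _ _] := HB b hbt.
have sub : B a \subset B b by apply: sa; have := ltn_ord b; lia.
set D := B b :\: B a.
have cD : #|D| = (b - a)%N by rewrite cardsD (setIidPr sub) ca cb.
have sD : \sum_(o in D) u o = sig b - sig a.
  by rewrite /sig [X in _ = X - _](big_setID (B a)) /= (setIidPr sub) addrAC subrr add0r.
have boxD : forall c, -1 <= (\sum_(o in D) u o) 0 c <= 1.
  by move=> c; rewrite sD !mxE -ler_norml.
pose T := [set x : 'I_t | Some x \in D].
have hbt' := ltn_ord b.
case: (boolP (None \in D)) => hN; last first.
  have eD : D = Some @: T.
    apply/setP => -[x|]; first by rewrite mem_imset ?inE //; move=> p q [].
    rewrite (negbTE hN); apply/esym/imsetP => -[x _] //.
  apply: (hmin T).
  - by rewrite -(card_imset _ (@Some_inj _)) -eD cD; lia.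
  - by rewrite -(card_imset _ (@Some_inj _)) -eD cD; lia.
  - move=> c; have := boxD c; rewrite eD big_imset //=; move=> p q _ _ []; done.
have eD : D :\ None = Some @: T.
  apply/setP => -[x|]; first by rewrite mem_imset ?inE //; move=> p q [].
  rewrite !inE eqxx /=; apply/esym/imsetP => -[x _] //.
have sT : \sum_(o in D) u o = - s + \sum_(x in T) v x.
  rewrite (big_setD1 None) //= eD big_imset //=; move=> p q _ _ []; done.
have cT : #|T| = (b - a).-1.
  move: (cardsD1 None D); rewrite hN eD card_imset; last by move=> p q [].
  rewrite cD; lia.
have sC : \sum_(x in ~: T) v x = - \sum_(o in D) u o.
  rewrite sT opprD opprK /s [X in _ = X - _](bigID (mem T)) /= addrAC subrr add0r.
  by apply: eq_bigl => x; rewrite in_setC.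
have cC : (2 <= #|~: T|)%N /\ (#|~: T| < t)%N.
  have := cardsC T; rewrite card_ord cT -subn1; move: hbt' ab; clear; lia.
apply: (hmin (~: T)).
- exact: cC.1.
- exact: cC.2.
- move=> c; rewrite sC mxE; have := boxD c; lra.
Qed.
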